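(* Let $(\mathfrak{g},[\cdot,\ldots,\cdot],\varepsilon,\alpha)$ be an $n$-Hom-Lie color algebra with $n\geq3$ and let $\mathcal{N}$ be a bijective Nijenhuis operator on it. Let $a\in\mathfrak{g}_0$ with $\alpha(a)=a$ and $\mathcal{N}(a)\in Z(\mathfrak{g})$. Then $\mathcal{N}$ is a Nijenhuis operator on the $(n-1)$-Hom-Lie color algebra $(\mathfrak{g},\{\cdot,\ldots,\cdot\},\varepsilon,\alpha)$, where $\{x_1,\ldots,x_{n-1}\}=[a,x_1,\ldots,x_{n-1}]$.
   Context: $\mathbb{K}$ is a field of characteristic zero and $\Gamma$ an abelian group; $\mathfrak{g}_0$ is the degree-$0$ component. A bicharacter is a map $\varepsilon:\Gamma\times\Gamma\to\mathbb{K}\setminus\{0\}$ with $\varepsilon(a,b)\varepsilon(b,a)=1$, $\varepsilon(a,b+c)=\varepsilon(a,b)\varepsilon(a,c)$, $\varepsilon(a+b,c)=\varepsilon(a,c)\varepsilon(b,c)$. For homogeneous $x,y$, $\varepsilon(x,y)=\varepsilon(|x|,|y|)$ and $\varepsilon(x,y_1+\dots+y_k)=\varepsilon(|x|,|y_1|+\dots+|y_k|)$ ($=1$ for an empty sum). An $m$-Hom-Lie color algebra $(\mathfrak{g},[\cdot,\ldots,\cdot],\varepsilon,\alpha)$ is a $\Gamma$-graded vector space with an $m$-linear bracket of degree zero, a bicharacter $\varepsilon$ and a degree-zero linear map $\alpha$ such that for homogeneous elements: (i) $[x_1,\ldots,x_i,x_{i+1},\ldots,x_m]=-\varepsilon(x_i,x_{i+1})[x_1,\ldots,x_{i+1},x_i,\ldots,x_m]$;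 (ii) $[\alpha(x_1),\ldots,\alpha(x_{m-1}),[y_1,\ldots,y_m]]=\sum_{i=1}^m\varepsilon(x_1+\dots+x_{m-1},y_1+\dots+y_{i-1})[\alpha(y_1),\ldots,\alpha(y_{i-1}),[x_1,\ldots,x_{m-1},y_i],\alpha(y_{i+1}),\ldots,\alpha(y_m)]$. The center is $Z(\mathfrak{g})=\{x:[x,y_1,\ldots,y_{m-1}]=0\ \forall y_i\}$. For an $m$-ary bracket and a degree-zero linear $\mathcal{N}$, set $[\cdot]^0_{\mathcal{N}}=[\cdot]$ and $[x_1,\ldots,x_m]^j_{\mathcal{N}}=\sum_{i_1<\dots<i_j}[x_1,\ldots,\mathcal{N}x_{i_1},\ldots,\mathcal{N}x_{i_j},\ldots,x_m]-\mathcal{N}([x_1,\ldots,x_m]^{j-1}_{\mathcal{N}})$ for $1\le j\le m-1$ ($\mathcal{N}$ applied exactly at positions $i_1,\ldots,i_j$). $\mathcal{N}$ is a Nijenhuis operator on the $m$-ary algebra if $\mathcal{N}\circ\alpha=\alpha\circ\mathcal{N}$ and $[\mathcal{N}x_1,\ldots,\mathcal{N}x_m]=\mathcal{N}([x_1,\ldots,x_m]^{m-1}_{\mathcal{N}})$. *)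

(* Defs.v *)
From HB Require Import structures.
From mathcomp Require Import all_boot all_order all_algebra.
Set Implicit Arguments. Unset Strict Implicit. Unset Printing Implicit Defensive.
Import Order.TTheory GRing.Theory Num.Theory.
Local Open Scope ring_scope.

Section Defs.
Variables (K : fieldType) (Gamma : zmodType) (g : lmodType K).

Definition char_zero : Prop := [pchar K] =i pred0.

Definition bicharacter (eps : Gamma -> Gamma -> K) : Prop :=
  [/\ forall a b, eps a b != 0,
      forall a b, eps a b * eps b a = 1,
      forall a b c, eps a (b + c) = eps a b * eps a c &
      forall a b c, eps (a + b) c = eps a c * eps b c].

Definition grading (gr : Gamma -> pred g) : Prop :=
  [/\
      forall d, 0 \in gr d,
      forall d (k : K) x y, x \in gr d -> y \in gr d -> k *: x + y \in gr d,
      forall x : g, exists s : seq (Gamma * g),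
        [/\ uniq (map fst s), all (fun p => p.2 \in gr p.1) s &
            x = \sum_(p <- s) p.2] &
      forall s : seq (Gamma * g),
        uniq (map fst s) -> all (fun p => p.2 \in gr p.1) s ->
        \sum_(p <- s) p.2 = 0 -> all (fun p => p.2 == 0) s].

Definition deg0_linear (gr : Gamma -> pred g) (f : g -> g) : Prop :=
  linear f /\ forall d x, x \in gr d -> f x \in gr d.

Definition fset_at m (x : {ffun 'I_m -> g}) (i : 'I_m) (y : g) : {ffun 'I_m -> g} :=
  [ffun j => if j == i then y else x j].

Definition cons_ff m (z : g) (y : {ffun 'I_m.-1 -> g}) : {ffun 'I_m -> g} :=
  [ffun j : 'I_m => if val j == 0%N then z
                   else oapp y 0 (insub (val j).-1 : option 'I_m.-1)].

Definition snoc_ff m (x : {ffun 'I_m.-1 -> g}) (z : g) : {ffun 'I_m -> g} :=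
  [ffun j : 'I_m => if (val j < m.-1)%N
                   then oapp x 0 (insub (val j) : option 'I_m.-1) else z].

Definition HomLieColor (eps : Gamma -> Gamma -> K) (gr : Gamma -> pred g)
    (alpha : g -> g) m (br : {ffun 'I_m -> g} -> g) : Prop :=
  bicharacter eps /\
  [/\ deg0_linear gr alpha,
      forall (x : {ffun 'I_m -> g}) (i : 'I_m), linear (fun y => br (fset_at x i y)),
      forall (x : {ffun 'I_m -> g}) (d : 'I_m -> Gamma),
        (forall j, x j \in gr (d j)) -> br x \in gr (\sum_j d j),
      forall (x : {ffun 'I_m -> g}) (d : 'I_m -> Gamma) (i i' : 'I_m),
        (forall j, x j \in gr (d j)) -> val i' = (val i).+1 ->
        br x = - (eps (d i) (d i') *: br [ffun j => if j == i then x i' else if j == i' then x i else x j]) &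
      forall (x : {ffun 'I_m.-1 -> g}) (dx : 'I_m.-1 -> Gamma)
             (y : {ffun 'I_m -> g}) (dy : 'I_m -> Gamma),
        (forall j, x j \in gr (dx j)) -> (forall j, y j \in gr (dy j)) ->
        br (snoc_ff [ffun j => alpha (x j)] (br y)) =
        \sum_(i < m) eps (\sum_j dx j) (\sum_(k < m | (k < i)%N) dy k) *:
          br [ffun k => if k == i then br (snoc_ff x (y i)) else alpha (y k)]].

Definition in_center m (br : {ffun 'I_m -> g} -> g) (z : g) : Prop :=
  forall y : {ffun 'I_m.-1 -> g}, br (cons_ff z y) = 0.

Fixpoint br_N m (br : {ffun 'I_m -> g} -> g) (N : g -> g) (j : nat)
    (x : {ffun 'I_m -> g}) : g :=
  match j with
  | 0%N => br x
  | j'.+1 => \sum_(S : {set 'I_m} | #|S| == j'.+1)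
               br [ffun k => if k \in S then N (x k) else x k]
             - N (br_N br N j' x)
  end.

Definition Nijenhuis (gr : Gamma -> pred g) (alpha : g -> g) m
    (br : {ffun 'I_m -> g} -> g) (N : g -> g) : Prop :=
  [/\ deg0_linear gr N,
      forall x, N (alpha x) = alpha (N x) &
      forall x : {ffun 'I_m -> g},
        br [ffun k => N (x k)] = N (br_N br N m.-1 x)].

Definition induced_br m (br : {ffun 'I_m -> g} -> g) (a : g)
    (x : {ffun 'I_m.-1 -> g}) : g := br (cons_ff a x).

End Defs.

(* Main.v *)
Require Import Defs.
From HB Require Import structures.
From mathcomp Require Import all_boot all_order all_algebra.
Import Order.TTheory GRing.Theory Num.Theory.
Local Open Scope ring_scope.
Set Implicit Arguments. Unset Strict Implicit. Unset Printing Implicit Defensive.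
Section H.
Variables (K : fieldType) (Gamma : zmodType) (g : lmodType K).

Lemma cons0 m (z : g) (y : {ffun 'I_m -> g}) : cons_ff (m:=m.+1) z y ord0 = z.
Proof. by rewrite ffunE. Qed.

Lemma consS m (z : g) (y : {ffun 'I_m -> g}) k :
  cons_ff (m:=m.+1) z y (lift ord0 k) = y k.
Proof. by rewrite ffunE /= add0n valK. Qed.

Lemma snocL m (x : {ffun 'I_m -> g}) (z : g) k :
  snoc_ff (m:=m.+1) x z (lift ord_max k) = x k.
Proof.
rewrite ffunE /=.
have -> : bump m k = k by rewrite /bump leqNgt ltn_ord.
by rewrite ltn_ord valK.
Qed.

Lemma snocM m (x : {ffun 'I_m -> g}) (z : g) :
  snoc_ff (m:=m.+1) x z ord_max = z.
Proof. by rewrite ffunE /= ltnn. Qed.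

Lemma cons_decomp m (f : {ffun 'I_m.+1 -> g}) :
  f = cons_ff (m:=m.+1) (f ord0) [ffun k => f (lift ord0 k)].
Proof.
apply/ffunP=> k; case: (unliftP ord0 k) => [k'|] ->.
  by rewrite consS ffunE.
by rewrite cons0.
Qed.

Lemma snoc_cons q (a z : g) (u : {ffun 'I_q -> g}) :
  snoc_ff (m:=q.+2) (cons_ff (m:=q.+1) a u) z =
  cons_ff (m:=q.+2) a (snoc_ff (m:=q.+1) u z).
Proof.
apply/ffunP=> k; case: (unliftP ord_max k) => [k1|] ->.
  rewrite snocL; case: (unliftP ord0 k1) => [k2|] ->.
    have -> : lift ord_max (lift ord0 k2) = lift ord0 (lift ord_max k2) :> 'I_q.+2.
      by apply: ord_inj; rewrite lift_max !lift0 lift_max.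
    by rewrite !consS snocL.
  have -> : lift ord_max ord0 = ord0 :> 'I_q.+2.
    by apply: ord_inj; rewrite lift_max.
  by rewrite !cons0.
rewrite snocM.
have -> : ord_max = lift ord0 ord_max :> 'I_q.+2 by apply: ord_inj; rewrite lift0.
by rewrite consS snocM.
Qed.

Definition dcons m (e : Gamma) (d : 'I_m -> Gamma) : 'I_m.+1 -> Gamma :=
  fun k => if unlift ord0 k is Some k' then d k' else e.
Definition dsnoc m (d : 'I_m -> Gamma) (e : Gamma) : 'I_m.+1 -> Gamma :=
  fun k => if unlift ord_max k is Some k' then d k' else e.

Lemma cons_gr (gr : Gamma -> pred g) m (z : g) e (x : {ffun 'I_m -> g}) d :
  z \in gr e -> (forall j, x j \in gr (d j)) ->
  forall k, cons_ff (m:=m.+1) z x k \in gr (dcons e d k).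
Proof.
move=> hz hx k; rewrite /dcons; case: (unliftP ord0 k) => [k'|] ->.
  by rewrite consS ?liftK.
by rewrite cons0 ?unlift_none.
Qed.

Lemma snoc_gr (gr : Gamma -> pred g) m (z : g) e (x : {ffun 'I_m -> g}) d :
  z \in gr e -> (forall j, x j \in gr (d j)) ->
  forall k, snoc_ff (m:=m.+1) x z k \in gr (dsnoc d e k).
Proof.
move=> hz hx k; rewrite /dsnoc; case: (unliftP ord_max k) => [k'|] ->.
  by rewrite snocL ?liftK.
by rewrite snocM ?unlift_none.
Qed.

Lemma linear0' (f : g -> g) : linear f -> f 0 = 0.
Proof.
move=> hf; have := hf (-1) 0 0.
by rewrite scaler0 add0r scaleN1r addNr.
Qed.

Lemma br_zero_at m (br : {ffun 'I_m -> g} -> g) :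
  (forall (x : {ffun 'I_m -> g}) (i : 'I_m), linear (fun y => br (fset_at x i y))) ->
  forall (f : {ffun 'I_m -> g}) i, f i = 0 -> br f = 0.
Proof.
move=> hl f i hi.
have -> : f = fset_at f i 0.
  by apply/ffunP=> k; rewrite ffunE; case: eqP => // ->.
exact: (linear0' (hl f i)).
Qed.


Lemma two_neq0 : char_zero K -> (2%:R : K) != 0.
Proof.
move=> hc; have := hc 2; rewrite !inE /=.
by move=> ->.
Qed.

Lemma eps00 (eps : Gamma -> Gamma -> K) : bicharacter eps -> eps 0 0 = 1.
Proof.
case=> h1 _ h3 _; have := h3 0 0 0; rewrite addr0 => h.
by apply: (mulfI (h1 0 0)); rewrite mulr1 -h.
Qed.

Lemma rep_zero (eps : Gamma -> Gamma -> K) (gr : Gamma -> pred g) (alpha : g -> g)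
   m (br : {ffun 'I_m -> g} -> g) (a : g) :
  char_zero K -> HomLieColor eps gr alpha br ->
  forall j (f : {ffun 'I_m -> g}) (d : 'I_m -> Gamma) (i0 : 'I_m) (hj : (j < m)%N),
  val i0 = 0%N -> (0 < j)%N -> (forall k, f k \in gr (d k)) ->
  f i0 = a -> f (Ordinal hj) = a -> d i0 = 0 -> d (Ordinal hj) = 0 -> br f = 0.
Proof.
move=> hc [hb [_ _ _ hskew _]].
elim=> [//|j IH] f d i0 hj hv0 _ hf hfa hfb hd0 hdb.
case: j IH hj hfb hdb => [|j] IH hj hfb hdb.
  have hv : val (Ordinal hj) = (val i0).+1 by rewrite hv0.
  have := hskew f d i0 (Ordinal hj) hf hv.
  rewrite hd0 hdb eps00 // scale1r.
  have -> : [ffun j0 => if j0 == i0 then f (Ordinal hj) else if j0 == Ordinal hj then f i0 else f j0] = f.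
    apply/ffunP=> k; rewrite ffunE.
    case: eqP => [->|_]; first by rewrite hfb hfa.
    by case: eqP => [->|_] //; rewrite hfb hfa.
  move=> h; have : (2%:R : K) *: br f = 0.
    by rewrite scaler_nat mulr2n {1}h addNr.
  by move/eqP; rewrite scaler_eq0 (negbTE (two_neq0 hc)) /= => /eqP.
pose i := Ordinal (ltnW hj).
have hv : val (Ordinal hj) = (val i).+1 by [].
rewrite (hskew f d i (Ordinal hj) hf hv).
set f' := [ffun _ => _].
pose d' := fun k => if k == i then d (Ordinal hj) else if k == Ordinal hj then d i else d k.
have hne : forall k : 'I_m, val k = 0%N -> (k == i) = false /\ (k == Ordinal hj) = false.
  by move=> k hk; split; apply/eqP => /(congr1 val); rewrite /= hk.
have [hn1 hn2] := hne i0 hv0.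
rewrite (IH f' d' i0 (ltnW hj)) ?scaler0 ?oppr0 //.
- move=> k; rewrite /f' /d' ffunE.
  by case: eqP => _; last case: eqP => _.
- by rewrite /f' ffunE hn1 hn2.
- by rewrite /f' ffunE eqxx.
- by rewrite /d' hn1 hn2.
- by rewrite /d' eqxx.
Qed.


Lemma imset_lift0_ord0 m (S : {set 'I_m}) : (ord0 \in [set lift ord0 x | x in S]) = false.
Proof.
apply/negbTE/imsetP => [[k _ h]]; move: (neq_lift ord0 k); by rewrite -h eqxx.
Qed.

Lemma T_cons m (br : {ffun 'I_m.+1 -> g} -> g) (N : g -> g) (a : g) :
  (forall y : {ffun 'I_m -> g}, br (cons_ff (m:=m.+1) (N a) y) = 0) ->
  forall j (x : {ffun 'I_m -> g}),
  \sum_(S : {set 'I_m.+1} | #|S| == j)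
     br [ffun k => if k \in S then N (cons_ff (m:=m.+1) a x k) else cons_ff (m:=m.+1) a x k] =
  \sum_(S : {set 'I_m} | #|S| == j)
     br (cons_ff (m:=m.+1) a [ffun k => if k \in S then N (x k) else x k]).
Proof.
move=> hc j x.
rewrite (bigID (fun S : {set 'I_m.+1} => ord0 \in S)) /= [X in X + _](_ : _ = 0) ?add0r; last first.
  apply: big1 => S /andP [_ h0]; set f := [ffun _ => _]; rewrite (cons_decomp f) {2}/f ffunE h0 cons0; exact: hc.
rewrite (reindex_onto (fun S' : {set 'I_m} => [set lift ord0 k | k in S'])
                      (fun S => lift ord0 @^-1: S)); last first.
  move=> S /andP [_ h0]; apply/setP => k; case: (unliftP ord0 k) => [k'|] ->.
    by rewrite (mem_imset _ _ (@lift_inj _ ord0)) inE.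
  by rewrite imset_lift0_ord0 (negbTE h0).
apply: eq_big => [S'|S' _].
  rewrite card_imset; last exact: lift_inj.
  rewrite imset_lift0_ord0 andbT.
  have -> : lift ord0 @^-1: [set lift ord0 k | k in S'] == S'.
    by apply/eqP/setP=> k; rewrite inE (mem_imset _ _ (@lift_inj _ ord0)).
  by rewrite andbT.
congr br; apply/ffunP=> k; rewrite ffunE.
case: (unliftP ord0 k) => [k'|] ->.
  by rewrite (mem_imset _ _ (@lift_inj _ ord0)) !consS ffunE.
by rewrite imset_lift0_ord0 !cons0.
Qed.

Lemma brN_cons m (br : {ffun 'I_m.+1 -> g} -> g) (N : g -> g) (a : g) :
  (forall y : {ffun 'I_m -> g}, br (cons_ff (m:=m.+1) (N a) y) = 0) ->
  forall j (x : {ffun 'I_m -> g}),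
  br_N br N j (cons_ff (m:=m.+1) a x) = br_N (induced_br br a) N j x.
Proof.
move=> hc; elim=> [//|j IH] x /=.
rewrite IH. have h := @T_cons m br N a hc (j.+1) x. exact: (congr1 (fun v => v - N (br_N (induced_br br a) N j x)) h).
Qed.

End H.
Unset Implicit Arguments. Set Strict Implicit.

Theorem proposition6p4 (K : fieldType) (Gamma : zmodType) (g : lmodType K)
    (eps : Gamma -> Gamma -> K) (gr : Gamma -> pred g) (alpha : g -> g)
    (n : nat) (br : {ffun 'I_n -> g} -> g) (N : g -> g) (a : g) :
  char_zero K ->
  grading gr ->
  (3 <= n)%N ->
  HomLieColor eps gr alpha br ->
  Nijenhuis gr alpha br N ->
  bijective N ->
  a \in gr 0 ->
  alpha a = a ->
  in_center br (N a) ->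
  HomLieColor eps gr alpha (induced_br br a) /\
  Nijenhuis gr alpha (induced_br br a) N.
Proof.
move=> hc hgr hn hH hN hbij ha0 haa hcen.
case: n br hn hH hN hcen => [|[|[|p]]] // br _ hH hN hcen.
have hcen' : forall y : {ffun 'I_p.+2 -> g}, br (cons_ff (m:=p.+3) (N a) y) = 0 := hcen.
have hH' := hH.
case: hH => hb [hal hlin hdeg hskew hfi].
case: hN => hNl hNa hNbr.
have sum_dcons : forall q (d : 'I_q -> Gamma), \sum_(j < q.+1) dcons 0 d j = \sum_j d j.
  move=> q d; rewrite big_ord_recl /dcons unlift_none add0r.
  by apply: eq_bigr => i _; rewrite liftK.
split.
- split=> //; split=> //.
  + move=> x i k u v; rewrite /induced_br; cbn [Nat.pred].
    have E : forall y, cons_ff (m:=p.+3) a (fset_at x i y) = fset_at (cons_ff (m:=p.+3) a x) (lift ord0 i) y.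
      move=> y; apply/ffunP=> k'; cbn [Nat.pred]; case: (unliftP ord0 k') => [k''|] ->.
        by rewrite consS ffunE [RHS]ffunE (inj_eq (@lift_inj _ ord0)) consS.
      by rewrite cons0 ffunE (negbTE (neq_lift _ _)) cons0.
    rewrite !E; exact: hlin.
  + move=> x d hx; rewrite /induced_br -sum_dcons.
    exact: hdeg (cons_gr ha0 hx).
  + move=> x d i i' hx hi; rewrite /induced_br.
    have hi2 : nat_of_ord (lift ord0 i') = (nat_of_ord (lift ord0 i)).+1 by rewrite !lift0 hi.
    rewrite (hskew _ _ _ _ (cons_gr ha0 hx) hi2) /dcons !liftK.
    congr (- (_ *: br _)); apply/ffunP => k; case: (unliftP ord0 k) => [k'|] ->.
      by rewrite ffunE [RHS]consS [RHS]ffunE !(inj_eq (@lift_inj _ ord0)) !consS.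
    by rewrite ffunE !(negbTE (neq_lift _ _)) !cons0.
  + move=> x dx y dy hx hy; rewrite /induced_br.
    have := hfi (cons_ff (m:=p.+2) a x) (dcons 0 dx) (cons_ff (m:=p.+3) a y) (dcons 0 dy)
                (cons_gr ha0 hx) (cons_gr ha0 hy).
    have -> : [ffun j => alpha (cons_ff (m:=p.+2) a x j)] = cons_ff (m:=p.+2) a [ffun j => alpha (x j)].
      apply/ffunP=> k; case: (unliftP ord0 k) => [k'|] ->.
        by rewrite ffunE [RHS]consS [RHS]ffunE consS.
      by rewrite ffunE !cons0 haa.
    rewrite snoc_cons => ->.
    rewrite big_ord_recl cons0.
    have Z : br (snoc_ff (m:=p.+3) (cons_ff (m:=p.+2) a x) a) = 0.
      have hj : (p.+2 < p.+3)%N by [].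
      apply: (rep_zero hc hH' (a:=a) (d := dsnoc (dcons 0 dx) 0) (i0 := ord0) (hj := hj)) => //.
      - exact: snoc_gr (cons_gr ha0 hx).
      - have -> : ord0 = lift ord_max ord0 :> 'I_p.+3 by apply: ord_inj; rewrite lift_max.
        by rewrite snocL cons0.
      - have -> : Ordinal hj = ord_max by apply: ord_inj.
        by rewrite snocM.
      - have -> : ord0 = lift ord_max ord0 :> 'I_p.+3 by apply: ord_inj; rewrite lift_max.
        by rewrite /dsnoc liftK /dcons unlift_none.
      - have -> : Ordinal hj = ord_max by apply: ord_inj.
        by rewrite /dsnoc unlift_none.
    rewrite Z (br_zero_at hlin (i := ord0)) ?ffunE ?eqxx // scaler0 add0r.
    apply: eq_bigr => i _; congr (eps _ _ *: br _).
    * exact: sum_dcons.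
      rewrite big_mkcond big_ord_recl /dcons unlift_none !lift0 /= add0r [RHS]big_mkcond.
      by apply: eq_bigr => k _; rewrite liftK ltnS.
    * apply/ffunP=> k; case: (unliftP ord0 k) => [k'|] ->.
        rewrite ffunE [RHS]consS [RHS]ffunE (inj_eq (@lift_inj _ ord0)) !consS snoc_cons.
        by [].
      by rewrite ffunE (negbTE (neq_lift _ _)) !cons0 haa.
- split=> // x.
  have hinj := bij_inj hbij.
  have hN0 : N 0 = 0 := linear0' hNl.1.
  have h := hNbr (cons_ff (m:=p.+3) a x).
  have E : [ffun k => N (cons_ff (m:=p.+3) a x k)] = cons_ff (m:=p.+3) (N a) [ffun k => N (x k)].
    apply/ffunP=> k; case: (unliftP ord0 k) => [k'|] ->.
      by rewrite ffunE [RHS]consS [RHS]ffunE consS.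
    by rewrite ffunE !cons0.
  rewrite E hcen' (brN_cons hcen') in h.
  have h' : N (br_N (induced_br br a) N p.+2 x) = N 0 by rewrite -h hN0.
  have h2 : \sum_(S : {set 'I_p.+2} | #|S| == p.+2)
              induced_br br a [ffun k => if k \in S then N (x k) else x k]
            - N (br_N (induced_br br a) N p.+1 x) = 0 := hinj _ _ h'.
  move/eqP: h2; rewrite subr_eq0 => /eqP h2.
  apply: (etrans _ h2); apply: esym.
  rewrite (big_pred1 setT) /induced_br.
    congr br; congr cons_ff; apply/ffunP=> k; by rewrite !ffunE in_setT.
  move=> S /=; apply/eqP/eqP => [hS|->]; last by rewrite cardsT card_ord.
  by apply/eqP; rewrite eqEcard subsetT cardsT card_ord hS leqnn.
Qed.
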